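(* Let $(G,\alpha)$ be a finite Hom-group, $\mathbb{K}$ a field, and $\mathbb{K}G$ the Hom-group Hopf algebra. If $A$ is a Hom-sub-Hopf algebra of $\mathbb{K}G$, then $\dim_{\mathbb{K}}(A)$ divides $|G|$.
   Context: A Hom-group is a tuple $(G,\mu,1,\alpha)$ where $G$ is a set, $\mu:G\times G\to G$ is a binary operation written $\mu(g,h)=gh$, $1\in G$ is a distinguished element, and $\alpha:G\to G$ is a bijection, such that: (1) Hom-associativity: $\alpha(g)(hk)=(gh)\alpha(k)$ for all $g,h,k\in G$; (2) $\alpha(gk)=\alpha(g)\alpha(k)$ for all $g,k$; (3) Hom-unitality: $g1=1g=\alpha(g)$ for all $g$, and $\alpha(1)=1$; (4) for every $g\in G$ there exists $g^{-1}\in G$ with $gg^{-1}=g^{-1}g=1$ (such an inverse is unique). The Hom-group Hopf algebra $\mathbb{K}G$ is the $\mathbb{K}$-vector space with basis $G$, with multiplication the bilinear extension of that of $G$, unit $1$, twisting map the linear extension of $\alpha$, comultiplication $\Delta(g)=g\otimes g$, counit $\varepsilon(g)=1$, antipode $S(g)=g^{-1}$ (extended linearly), and coalgebra twisting map $\mathrm{Id}$. A Hom-sub-Hopf algebra of $\mathbb{K}G$ is a subspace $A$ containing $1$ with $AA\subseteq A$, $\alpha(A)= A$, $\Delta(A)\subseteq A\otimes A$, and $S(A)\subseteq A$, so that $A$ with the restricted structure maps is itself a Hom-Hopf algebra. *)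

(* Defs.v *)
From HB Require Import structures.
From mathcomp Require Import all_boot all_order all_algebra.
Set Implicit Arguments. Unset Strict Implicit. Unset Printing Implicit Defensive.
Import GRing.Theory.
Local Open Scope ring_scope.

Record homGroup (G : finType) := HomGroup {
  hmul : G -> G -> G;
  hone : G;
  halpha : G -> G;
  halpha_bij : bijective halpha;
  hom_assoc : forall g h k, hmul (halpha g) (hmul h k) = hmul (hmul g h) (halpha k);
  halpha_mul : forall g k, halpha (hmul g k) = hmul (halpha g) (halpha k);
  hom_unitl : forall g, hmul g hone = halpha g;
  hom_unitr : forall g, hmul hone g = halpha g;
  halpha_one : halpha hone = hone;
  hom_inv : forall g, exists h, hmul g h = hone /\ hmul h g = hone
}.

Section HomGroupAlgebra.
Variables (G : finType) (H : homGroup G) (K : fieldType).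

Definition hinv (g : G) : G :=
  odflt (hone H) [pick h | (hmul H g h == hone H) && (hmul H h g == hone H)].

(* KG is realised as the K-vector space of functions G -> K, the basis
   element g being the indicator function of g. *)
Definition KG := {ffun G -> K^o}.

Definition hbasis (g : G) : KG := [ffun x => if x == g then 1 else 0].

Definition kg_mul (a b : KG) : KG :=
  [ffun x => \sum_(y : G) \sum_(z : G | hmul H y z == x) a y * b z].

Definition kg_one : KG := hbasis (hone H).

Definition kg_alpha (a : KG) : KG := [ffun x => \sum_(g : G | halpha H g == x) a g].

Definition kg_S (a : KG) : KG := [ffun x => \sum_(g : G | hinv g == x) a g].

(* KG (x) KG is realised as functions G * G -> K, g (x) h being the
   indicator of (g, h). *)
Definition KG2 := {ffun (G * G)%type -> K^o}.

Definition kg_tens (a b : KG) : KG2 := [ffun p => a p.1 * b p.2].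

Definition kg_Delta (a : KG) : KG2 := [ffun p => if p.1 == p.2 then a p.1 else 0].

Definition tensv (A B : {vspace KG}) : {vspace KG2} :=
  <<[seq kg_tens a b | a <- vbasis A, b <- vbasis B]>>%VS.

Definition hom_sub_hopf (A : {vspace KG}) : Prop :=
  [/\ kg_one \in A,
      (forall a b, a \in A -> b \in A -> kg_mul a b \in A),
      (forall a, a \in A -> kg_alpha a \in A) /\
      (forall b, b \in A -> exists2 a, a \in A & kg_alpha a = b),
      (forall a, a \in A -> kg_Delta a \in tensv A A)
    & (forall a, a \in A -> kg_S a \in A)].

End HomGroupAlgebra.

(* Main.v *)
Require Import Defs.
From HB Require Import structures.
From mathcomp Require Import all_boot all_order all_algebra all_fingroup.
Set Implicit Arguments. Unset Strict Implicit. Unset Printing Implicit Defensive.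

Section Grp.
Variables (G : finType) (H : homGroup G).

Definition ainv : G -> G := invF (bij_inj (halpha_bij H)).
Lemma ainvK : cancel (halpha H) ainv. Proof. exact: invF_f. Qed.
Lemma ainvKV : cancel ainv (halpha H). Proof. exact: f_invF. Qed.

Lemma ainv_mul x y : ainv (hmul H x y) = hmul H (ainv x) (ainv y).
Proof.
by apply: (bij_inj (halpha_bij H)); rewrite ainvKV halpha_mul !ainvKV.
Qed.

Lemma ainv_one : ainv (hone H) = hone H.
Proof. by rewrite -{1}(halpha_one H) ainvK. Qed.

Lemma hinvP g : hmul H g (hinv H g) = hone H /\ hmul H (hinv H g) g = hone H.
Proof.
rewrite /hinv; case: pickP => [h /andP[/eqP -> /eqP ->] //|none].
have [h [h1 h2]] := hom_inv H g.
by have := none h; rewrite h1 h2 !eqxx.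
Qed.

Definition gmul x y := ainv (hmul H x y).

Lemma gmulA : associative gmul.
Proof.
move=> x y z; rewrite /gmul; congr ainv; rewrite !ainv_mul.
rewrite -{1}(ainvKV x) -{2}(ainvKV z); exact: hom_assoc.
Qed.

Lemma gmul1 : left_id (hone H) gmul.
Proof. by move=> x; rewrite /gmul hom_unitr ainvK. Qed.

Lemma gmulV : left_inverse (hone H) (hinv H) gmul.
Proof. by move=> x; rewrite /gmul (hinvP x).2 ainv_one. Qed.

Definition hgT (G' : finType) (H' : homGroup G') : Type := G'.
HB.instance Definition _ := Finite.on (hgT H).
HB.instance Definition _ := Finite_isGroup.Build (hgT H) gmulA gmul1 gmulV.
End Grp.

Lemma hom_lagrange (G : finType) (H : homGroup G) (S : {set G}) :
  hone H \in S -> (forall x y, x \in S -> y \in S -> hmul H x y \in S) ->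
  (forall x, x \in S -> ainv H x \in S) -> (#|S| %| #|G|)%N.
Proof.
move=> S1 SM SA.
pose f : G -> hgT H := id.
have injf : injective f by [].
pose S' : {set hgT H} := f @: S.
have memS' x : (x \in S') = ((x : G) \in S).
  apply/imsetP/idP => [[y yS ->] //|xS]; by exists x.
have gS : group_set S'.
  apply/group_setP; split; first by rewrite memS'.
  by move=> x y; rewrite !memS' => xS yS; apply: SA; apply: SM.
have := cardSg (subsetT (Group gS)).
rewrite cardsT /= card_imset //.
by rewrite (@bij_eq_card _ _ f) //; exists f.
Qed.

Import GRing.Theory.
Local Open Scope ring_scope.

Section Lin.
Variables (G : finType) (H : homGroup G) (K : fieldType).

Lemma sum_if (T : finType) (P : pred T) (g : T) (F : T -> K) :
  \sum_(y | P y) (if y == g then F y else 0) = if P g then F g else 0.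
Proof.
rewrite -big_mkcondr; case Pg: (P g).
  by apply: big_pred1 => y /=; case: eqP => [->|]; rewrite ?Pg ?andbF.
by apply: big_pred0 => y /=; case: eqP => [->|]; rewrite ?Pg ?andbF.
Qed.

Lemma hbasisE (g x : G) : hbasis K g x = if x == g then 1 else 0.
Proof. by rewrite ffunE. Qed.

Lemma kg_mul_basis (g h : G) :
  kg_mul H (hbasis K g) (hbasis K h) = hbasis K (hmul H g h).
Proof.
apply/ffunP => x; rewrite !ffunE.
rewrite (eq_bigr (fun y => if y == g then
   \sum_(z | hmul H y z == x) (hbasis K g y * hbasis K h z) else 0)); last first.
  move=> y _; case: eqP => // ne; apply: big1 => z _.
  by rewrite hbasisE; case: eqP => // _; rewrite mul0r.
rewrite sum_if /= (eq_bigr (fun z => if z == h then 1 else 0)); last first.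
  by move=> z _; rewrite !hbasisE eqxx mul1r.
rewrite (sum_if (fun z => hmul H g z == x)) /=.
by rewrite eq_sym.
Qed.

Lemma kg_alphaE (a : KG G K) (x : G) : kg_alpha H a x = a (ainv H x).
Proof.
rewrite ffunE; apply: big_pred1 => g /=.
apply/eqP/eqP => [<-|->]; [by rewrite ainvK | by rewrite ainvKV].
Qed.

Lemma kg_alpha_basis_inv (a : KG G K) (g : G) :
  kg_alpha H a = hbasis K g -> a = hbasis K (ainv H g).
Proof.
move=> e; apply/ffunP => x.
have := congr1 (fun f : KG G K => f (halpha H x)) e.
rewrite /= kg_alphaE ainvK => ->; rewrite !hbasisE.
have -> // : (halpha H x == g) = (x == ainv H g).
by apply/eqP/eqP => [<-|->]; rewrite ?ainvK ?ainvKV.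
Qed.

Definition Lg (g : G) (f : KG2 G K) : KG G K := [ffun x => f (x, g)].

Lemma Lg_sum (g : G) (I : Type) (r : seq I) (c : I -> K) (F : I -> KG2 G K) :
  Lg g (\sum_(i <- r) c i *: F i) = \sum_(i <- r) c i *: Lg g (F i).
Proof.
apply/ffunP => x; rewrite ffunE !sum_ffunE; apply: eq_bigr => i _.
by rewrite !ffunE.
Qed.

Lemma Lg_tensv (g : G) (A : {vspace KG G K}) v :
  v \in tensv A A -> Lg g v \in A.
Proof.
rewrite /tensv => vin.
rewrite (@coord_span _ _ _ (in_tuple _) _ vin) Lg_sum; apply: memv_suml => i _; apply: memvZ.
have : (in_tuple [seq kg_tens a b | a <- vbasis A, b <- vbasis A])`_i \in
   [seq kg_tens a b | a <- vbasis A, b <- vbasis A] by apply: mem_nth.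
case/allpairsP => [[a b] /= [ain bin ->]].
have -> : Lg g (kg_tens a b) = b g *: a.
  by apply/ffunP => x; rewrite !ffunE mulrC.
by apply: memvZ; apply: vbasis_mem.
Qed.

Lemma Lg_Delta (g : G) (a : KG G K) : Lg g (kg_Delta a) = a g *: hbasis K g.
Proof.
apply/ffunP => x; rewrite !ffunE /=.
by case: eqP => [->|_]; rewrite ?scaler0 // -[a g *: 1]/(a g * 1) mulr1.
Qed.

Lemma basis_in (A : {vspace KG G K}) (a : KG G K) (g : G) :
  (forall a, a \in A -> kg_Delta a \in tensv A A) ->
  a \in A -> a g != 0 -> hbasis K g \in A.
Proof.
move=> hD aA nz.
have := Lg_tensv g (hD a aA); rewrite Lg_Delta => h.
by rewrite -(scalerK nz (hbasis K g)); apply: memvZ.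
Qed.

Lemma expand (a : KG G K) : a = \sum_(g : G) a g *: hbasis K g.
Proof.
apply/ffunP => x; rewrite sum_ffunE.
rewrite (eq_bigr (fun g => if g == x then a g else 0)).
  by rewrite sum_if.
by move=> g _; rewrite !ffunE eq_sym; case: eqP => [->|_]; rewrite ?scaler0 // -[a x *: 1]/(a x * 1) mulr1.
Qed.

Lemma free_basis (s : seq G) : uniq s -> free [seq hbasis K g | g <- s].
Proof.
move=> us; apply/(@freeP _ _ _ (in_tuple _)) => k sk i.
have ilt : (i < size s)%N by rewrite -(size_map (hbasis K)).
have := congr1 (fun f : KG G K => f (nth (hone H) s i)) sk.
rewrite /= sum_ffunE ffunE.
rewrite (eq_bigr (fun j => if j == i then k j else 0)).
  by rewrite sum_if.
move=> j _.
have jlt : (j < size s)%N by rewrite -(size_map (hbasis K)).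
rewrite (nth_map (hone H)) // !ffunE nth_uniq // eq_sym.
case: eqP => [/val_inj ->|ne]; last first.
  case: eqP => [e|_]; first by case: (ne (congr1 val e)).
  by rewrite scaler0.
by rewrite eqxx -[k i *: 1]/(k i * 1) mulr1.
Qed.

End Lin.

Theorem mainTheorem12 (G : finType) (H : homGroup G) (K : fieldType)
  (A : {vspace KG G K}) :
  hom_sub_hopf H A -> (\dim A %| #|G|)%N.
Proof.
case=> h1 hM [_ hal] hD _.
pose S := [set g : G | hbasis K g \in A].
pose X := [seq hbasis K g | g <- enum S].
have sXA : (<<X>> <= A)%VS.
  by apply/span_subvP => _ /mapP[g gS ->]; rewrite mem_enum inE in gS.
have eA : A = <<X>>%VS.
  apply/vspaceP => v; apply/idP/idP => vin; last exact: (subvP sXA).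
  rewrite (expand v); apply: memv_suml => g _.
  case: (eqVneq (v g) 0) => [->|nz]; first by rewrite scale0r mem0v.
  apply: memvZ; apply: memv_span; apply: map_f.
  by rewrite mem_enum inE; exact: (basis_in hD vin nz).
have dimA : \dim A = #|S|.
  by rewrite eA (eqP (free_basis H K (enum_uniq (mem S)))) size_map cardE.
rewrite dimA; apply: (hom_lagrange (H := H)).
- by rewrite inE.
- move=> x y; rewrite !inE => hx hy; rewrite -kg_mul_basis; exact: hM.
- move=> x; rewrite !inE => hx; have [a aA ea] := hal _ hx.
  by rewrite -(kg_alpha_basis_inv ea).
Qed.
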